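(* The $2$-dimensional Fine $\mathbb{Q}$-codegree spectrum is $$S^F(2)=\left\{\tfrac{2}{k}\;\middle|\;k\in\mathbb{Z}_{>0}\right\}\cup\left\{\tfrac{3}{k}\;\middle|\;k\in\mathbb{Z}_{>0}\right\}.$$
   Context: For a $d$-dimensional rational polytope $P\subseteq\mathbb{R}^d$ and $a\in(\mathbb{Z}^d)^*$ let $h_P(a)=\min_{x\in P}\langle a,x\rangle$. For $s>0$ the Fine adjoint polytope is $P^{F(s)}=\{x\in\mathbb{R}^d : \langle a,x\rangle\ge h_P(a)+s \text{ for all } a\in(\mathbb{Z}^d)^*\setminus\{0\}\}$. The Fine $\mathbb{Q}$-codegree is $\mu^F(P)=(\sup\{s>0 : P^{F(s)}\neq\emptyset\})^{-1}$. The Fine spectrum in dimension $d$ is $S^F(d)=\{\mu^F(P) : P \text{ a } d\text{-dimensional lattice polytope}\}$, lattice polytopes being those with vertices in $\mathbb{Z}^d$. *)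

(* Defs.v *)
From Stdlib Require Import Reals Lra ZArith List.
Open Scope R_scope.

(* Points of R^2 and of the lattice Z^2 (the dual lattice (Z^2)^* is
   identified with Z^2 via the standard pairing). *)
Definition pt := (R * R)%type.
Definition lpt := (Z * Z)%type.

Definition to_pt (v : lpt) : pt := (IZR (fst v), IZR (snd v)).

Definition pairing (a : lpt) (x : pt) : R :=
  IZR (fst a) * fst x + IZR (snd a) * snd x.

Definition conv (V : list lpt) (x : pt) : Prop :=
  exists c : list (lpt * R),
    Forall (fun p => In (fst p) V /\ 0 <= snd p) c /\
    fold_right (fun p acc => snd p + acc) 0 c = 1 /\
    x = fold_right (fun p acc =>
          (snd p * IZR (fst (fst p)) + fst acc,
           snd p * IZR (snd (fst p)) + snd acc)) (0, 0) c.

(* conv V is 2-dimensional: V contains three affinely independent points. *)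
Definition full_dim2 (V : list lpt) : Prop :=
  exists p q r, In p V /\ In q V /\ In r V /\
    ((fst q - fst p) * (snd r - snd p) - (snd q - snd p) * (fst r - fst p))%Z
      <> 0%Z.

(* h_P(a) = min_{x in P} <a,x> (stated relationally: h is the minimum). *)
Definition is_hP (P : pt -> Prop) (a : lpt) (h : R) : Prop :=
  (exists y, P y /\ pairing a y = h) /\ (forall y, P y -> h <= pairing a y).

Definition fine_adjoint (P : pt -> Prop) (s : R) (x : pt) : Prop :=
  forall a : lpt, a <> (0%Z, 0%Z) ->
    forall h, is_hP P a h -> pairing a x >= h + s.

Definition fine_codegree (P : pt -> Prop) (mu : R) : Prop :=
  exists sigma,
    is_lub (fun s => 0 < s /\ exists x, fine_adjoint P s x) sigma /\
    mu = / sigma.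

Definition fine_spectrum2 (mu : R) : Prop :=
  exists V : list lpt, full_dim2 V /\ fine_codegree (conv V) mu.

(* Main.v *)
Require Import Defs.
From Stdlib Require Import Reals.
From Stdlib Require Import Lra Lia ZArith List Classical.
Open Scope R_scope.


Definition dot (a u : lpt) : Z := (fst a * fst u + snd a * snd u)%Z.
Definition det (a b : lpt) : Z := (fst a * snd b - snd a * fst b)%Z.
Definition vopp (a : lpt) : lpt := (- fst a, - snd a)%Z.
Definition vadd (a b : lpt) : lpt := (fst a + fst b, snd a + snd b)%Z.

Fixpoint hzl (a : lpt) (d : Z) (l : list lpt) : Z :=
  match l with nil => d | u :: l' => Z.min (dot a u) (hzl a d l') end.
Definition hz (V : list lpt) (a : lpt) : Z :=
  match V with nil => 0%Z | u :: l => hzl a (dot a u) l end.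

Lemma hzl_le_d a d l : (hzl a d l <= d)%Z.
Proof. induction l; simpl; lia. Qed.

Lemma hzl_le a d l u : In u l -> (hzl a d l <= dot a u)%Z.
Proof. induction l; simpl; [tauto|]. intros [<-|H]; [lia|]. specialize (IHl H); lia. Qed.

Lemma hz_le V a u : In u V -> (hz V a <= dot a u)%Z.
Proof. destruct V; simpl; [tauto|]. intros [<-|H]. apply hzl_le_d. apply hzl_le; auto. Qed.

Lemma hzl_ex a d l : hzl a d l = d \/ exists u, In u l /\ hzl a d l = dot a u.
Proof.
  induction l; simpl; [auto|].
  destruct (Z.min_spec (dot a a0) (hzl a d l)) as [[_ E]|[_ E]]; rewrite E.
  - right; exists a0; auto.
  - destruct IHl as [H|[u [H1 H2]]]; auto. right; exists u; auto.
Qed.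

Lemma hz_ex V a : V <> nil -> exists u, In u V /\ hz V a = dot a u.
Proof.
  destruct V as [|w l]; [tauto|]. intros _. simpl.
  destruct (hzl_ex a (dot a w) l) as [H|[u [H1 H2]]].
  - exists w; auto.
  - exists u; auto.
Qed.

Lemma hz_ge V a m : V <> nil -> (forall u, In u V -> (m <= dot a u)%Z) -> (m <= hz V a)%Z.
Proof. intros HV H. destruct (hz_ex V a HV) as [u [Hu E]]. rewrite E; auto. Qed.

Definition W V b := (- hz V b - hz V (vopp b))%Z.
Definition S3 V a1 a2 := (- hz V a1 - hz V a2 - hz V (vopp (vadd a1 a2)))%Z.
Definition nice V K :=
  (exists b, b <> (0%Z,0%Z) /\ K = 3 * W V b)%Z \/
  (exists a1 a2, det a1 a2 <> 0 /\ K = 2 * S3 V a1 a2)%Z.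

Lemma W_nonneg V b : V <> nil -> (0 <= W V b)%Z.
Proof.
  intros HV. destruct V as [|u l]; [tauto|].
  pose proof (hz_le (u::l) b u (or_introl eq_refl)).
  pose proof (hz_le (u::l) (vopp b) u (or_introl eq_refl)).
  unfold W, dot, vopp in *; simpl in *. lia.
Qed.

Lemma S3_nonneg V a1 a2 : V <> nil -> (0 <= S3 V a1 a2)%Z.
Proof.
  intros HV. destruct V as [|u l]; [tauto|].
  pose proof (hz_le (u::l) a1 u (or_introl eq_refl)).
  pose proof (hz_le (u::l) a2 u (or_introl eq_refl)).
  pose proof (hz_le (u::l) (vopp (vadd a1 a2)) u (or_introl eq_refl)).
  unfold S3, dot, vopp, vadd in *; simpl in *. lia.
Qed.

Lemma nice_nonneg V K : V <> nil -> nice V K -> (0 <= K)%Z.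
Proof.
  intros HV [[b [_ ->]]|[a1 [a2 [_ ->]]]].
  - pose proof (W_nonneg V b HV); lia.
  - pose proof (S3_nonneg V a1 a2 HV); lia.
Qed.

Lemma lincomb_hz V p (d s1 s2 : Z) b1 b2 : V <> nil -> (0<=s1)%Z -> (0<=s2)%Z ->
  (d * fst p = s1 * fst b1 + s2 * fst b2)%Z -> (d * snd p = s1 * snd b1 + s2 * snd b2)%Z ->
  (s1 * hz V b1 + s2 * hz V b2 <= d * hz V p)%Z.
Proof.
  intros HV H1 H2 E1 E2. destruct (hz_ex V p HV) as [u [Hu E]]. rewrite E.
  pose proof (hz_le V b1 u Hu). pose proof (hz_le V b2 u Hu).
  assert (A1: (s1 * hz V b1 <= s1 * dot b1 u)%Z) by (apply Z.mul_le_mono_nonneg_l; lia).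
  assert (A2: (s2 * hz V b2 <= s2 * dot b2 u)%Z) by (apply Z.mul_le_mono_nonneg_l; lia).
  assert (E3: (d * dot p u = s1 * dot b1 u + s2 * dot b2 u)%Z).
  { unfold dot. replace (d * (fst p * fst u + snd p * snd u))%Z with
      ((d * fst p) * fst u + (d * snd p) * snd u)%Z by ring. rewrite E1, E2. ring. }
  lia.
Qed.


Lemma pairA V b2 b3 d2 d3 : V <> nil -> b2 <> (0%Z,0%Z) ->
  (0 < d3)%Z -> (d3 <= d2)%Z ->
  (d2 * fst b2 + d3 * fst b3 = 0)%Z -> (d2 * snd b2 + d3 * snd b3 = 0)%Z ->
  exists K, nice V K /\ (K * (d2 + d3) <= 6 * (- (d2 * hz V b2) - d3 * hz V b3))%Z.
Proof.
  intros HV Hb2 H3 H23 E1 E2. exists (3 * W V b2)%Z. split.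
  - left. exists b2; auto.
  - pose proof (W_nonneg V b2 HV).
    pose proof (lincomb_hz V (vopp b2) d2 d3 0 b3 b3 HV ltac:(lia) ltac:(lia)
      ltac:(unfold vopp; simpl; lia) ltac:(unfold vopp; simpl; lia)).
    assert (A: (W V b2 * (d2 + d3) <= W V b2 * (2 * d2))%Z) by (apply Z.mul_le_mono_nonneg_l; lia).
    unfold W in *. nia.
Qed.

Lemma pair_gen V b2 b3 d2 d3 : V <> nil -> b2 <> (0%Z,0%Z) -> b3 <> (0%Z,0%Z) ->
  (0 < d2)%Z -> (0 < d3)%Z ->
  (d2 * fst b2 + d3 * fst b3 = 0)%Z -> (d2 * snd b2 + d3 * snd b3 = 0)%Z ->
  exists K, nice V K /\ (K * (d2 + d3) <= 6 * (- (d2 * hz V b2) - d3 * hz V b3))%Z.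
Proof.
  intros HV Hb2 Hb3 H2 H3 E1 E2.
  destruct (Z.le_gt_cases d3 d2).
  - apply pairA; auto.
  - destruct (pairA V b3 b2 d3 d2 HV Hb3 H2 ltac:(lia) ltac:(lia) ltac:(lia)) as [K [HK HK2]].
    exists K; split; auto; lia.
Qed.

Definition RLhyp (b1 b2 b3 : lpt) := b1 <> (0%Z,0%Z) /\ b2 <> (0%Z,0%Z) /\ b3 <> (0%Z,0%Z) /\
  (0 <= det b2 b3)%Z /\ (0 <= det b3 b1)%Z /\ (0 <= det b1 b2)%Z /\
  (0 < det b2 b3 + det b3 b1 + det b1 b2)%Z.
Definition DD b1 b2 b3 := (det b2 b3 + det b3 b1 + det b1 b2)%Z.
Definition NN V b1 b2 b3 := (- (det b2 b3 * hz V b1 + det b3 b1 * hz V b2 + det b1 b2 * hz V b3))%Z.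
Definition RLconcl V b1 b2 b3 := exists K, nice V K /\ (K * DD b1 b2 b3 <= 6 * NN V b1 b2 b3)%Z.

Lemma cramer1 b1 b2 b3 : (det b2 b3 * fst b1 + det b3 b1 * fst b2 + det b1 b2 * fst b3 = 0)%Z.
Proof. unfold det; ring. Qed.
Lemma cramer2 b1 b2 b3 : (det b2 b3 * snd b1 + det b3 b1 * snd b2 + det b1 b2 * snd b3 = 0)%Z.
Proof. unfold det; ring. Qed.

Lemma rot_hyp b1 b2 b3 : RLhyp b1 b2 b3 -> RLhyp b2 b3 b1.
Proof. unfold RLhyp; intuition lia. Qed.
Lemma rot_concl V b1 b2 b3 : RLconcl V b2 b3 b1 -> RLconcl V b1 b2 b3.
Proof. unfold RLconcl, DD, NN. intros [K [H1 H2]]. exists K; split; auto; lia. Qed.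

Lemma nz_of_scal (d : Z) (b : lpt) : (0 < d)%Z -> (d * fst b = 0)%Z -> (d * snd b = 0)%Z -> b = (0%Z,0%Z).
Proof. destruct b as [x y]; simpl; intros. f_equal; nia. Qed.

Lemma zero1 V b1 b2 b3 : V <> nil -> RLhyp b1 b2 b3 -> det b2 b3 = 0%Z -> RLconcl V b1 b2 b3.
Proof.
  intros HV [H1 [H2 [H3 [D1 [D2 [D3 D]]]]]] Z1.
  pose proof (cramer1 b1 b2 b3). pose proof (cramer2 b1 b2 b3).
  rewrite Z1 in *.
  assert (0 < det b3 b1)%Z.
  { destruct (Z.eq_dec (det b3 b1) 0) as [e|]; [|lia]. exfalso. apply H3. rewrite e in *.
    apply (nz_of_scal (det b1 b2)); lia. }
  assert (0 < det b1 b2)%Z.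
  { destruct (Z.eq_dec (det b1 b2) 0) as [e|]; [|lia]. exfalso. apply H2. rewrite e in *.
    apply (nz_of_scal (det b3 b1)); lia. }
  destruct (pair_gen V b2 b3 (det b3 b1) (det b1 b2) HV H2 H3) as [K [HK HK2]]; try lia.
  exists K; split; auto. unfold DD, NN. rewrite Z1. lia.
Qed.

Lemma ones V b1 b2 b3 : V <> nil -> det b2 b3 = 1%Z -> det b3 b1 = 1%Z -> det b1 b2 = 1%Z ->
  RLconcl V b1 b2 b3.
Proof.
  intros HV E1 E2 E3.
  pose proof (cramer1 b1 b2 b3). pose proof (cramer2 b1 b2 b3).
  rewrite E1, E2, E3 in *.
  assert (Hb3 : b3 = vopp (vadd b1 b2)).
  { destruct b3 as [x3 y3]; unfold vopp, vadd; simpl fst in *; simpl snd in *. f_equal; lia. }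
  exists (2 * S3 V b1 b2)%Z. split.
  - right. exists b1, b2. split; [lia|auto].
  - unfold DD, NN, S3. rewrite E1, E2, E3, <- Hb3. lia.
Qed.

Lemma red_mod (d : Z) b1 b2 e : (0 < d)%Z -> d = det b1 b2 ->
  exists p r1 r2 q1 q2, (0 <= r1 < d)%Z /\ (0 <= r2 < d)%Z /\
    (d * fst p = r1 * fst b1 + r2 * fst b2)%Z /\ (d * snd p = r1 * snd b1 + r2 * snd b2)%Z /\
    (fst e = fst p + q1 * fst b1 + q2 * fst b2)%Z /\ (snd e = snd p + q1 * snd b1 + q2 * snd b2)%Z.
Proof.
  intros Hd Ed.
  set (A := det e b2). set (B := det b1 e).
  assert (I1 : (d * fst e = A * fst b1 + B * fst b2)%Z) by (subst A B d; unfold det; ring).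
  assert (I2 : (d * snd e = A * snd b1 + B * snd b2)%Z) by (subst A B d; unfold det; ring).
  pose proof (Z.div_mod A d ltac:(lia)). pose proof (Z.mod_pos_bound A d Hd).
  pose proof (Z.div_mod B d ltac:(lia)). pose proof (Z.mod_pos_bound B d Hd).
  set (q1 := (A / d)%Z) in *. set (q2 := (B / d)%Z) in *.
  set (r1 := (A mod d)%Z) in *. set (r2 := (B mod d)%Z) in *.
  exists (fst e - q1 * fst b1 - q2 * fst b2, snd e - q1 * snd b1 - q2 * snd b2)%Z, r1, r2, q1, q2.
  simpl. repeat split; try lia.
  all: try nia.
Qed.


Lemma latpt b1 b2 : (2 <= det b1 b2)%Z -> exists p s1 s2,
  (0 <= s1 < det b1 b2)%Z /\ (0 <= s2 < det b1 b2)%Z /\ (s1 + s2 <= det b1 b2)%Z /\ (0 < s1 + s2)%Z /\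
  (det b1 b2 * fst p = s1 * fst b1 + s2 * fst b2)%Z /\ (det b1 b2 * snd p = s1 * snd b1 + s2 * snd b2)%Z.
Proof.
  intros Hd. set (d := det b1 b2) in *.
  assert (Hgen: exists p r1 r2, (0 <= r1 < d)%Z /\ (0 <= r2 < d)%Z /\ (0 < r1 + r2)%Z /\
     (d * fst p = r1 * fst b1 + r2 * fst b2)%Z /\ (d * snd p = r1 * snd b1 + r2 * snd b2)%Z).
  { destruct (red_mod d b1 b2 (1,0)%Z ltac:(lia) eq_refl) as [p [r1 [r2 [q1 [q2 [R1 [R2 [P1 [P2 [Q1 Q2]]]]]]]]]].
    destruct (Z.eq_dec (r1 + r2) 0) as [Z1|Z1].
    2:{ exists p, r1, r2. repeat split; lia. }
    destruct (red_mod d b1 b2 (0,1)%Z ltac:(lia) eq_refl) as [p' [r1' [r2' [q1' [q2' [R1' [R2' [P1' [P2' [Q1' Q2']]]]]]]]]].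
    destruct (Z.eq_dec (r1' + r2') 0) as [Z2|Z2].
    2:{ exists p', r1', r2'. repeat split; lia. }
    exfalso.
    assert (r1 = 0%Z) by lia. assert (r2 = 0%Z) by lia. assert (r1' = 0%Z) by lia. assert (r2' = 0%Z) by lia.
    subst r1 r2 r1' r2'.
    assert (p = (0,0)%Z) by (apply (nz_of_scal d); lia). 
    assert (p' = (0,0)%Z) by (apply (nz_of_scal d); lia). subst p p'. simpl in *.
    assert (E0 : ((q1 * fst b1 + q2 * fst b2) * (q1' * snd b1 + q2' * snd b2) -
                  (q1 * snd b1 + q2 * snd b2) * (q1' * fst b1 + q2' * fst b2) = (q1 * q2' - q2 * q1') * d)%Z)
      by (subst d; unfold det; ring).
    assert (E : (1 = (q1 * q2' - q2 * q1') * d)%Z).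
    { rewrite <- E0. 
      replace (q1 * fst b1 + q2 * fst b2)%Z with 1%Z by lia.
      replace (q1' * snd b1 + q2' * snd b2)%Z with 1%Z by lia.
      replace (q1 * snd b1 + q2 * snd b2)%Z with 0%Z by lia.
      ring. }
    clear - E Hd. set (k := (q1 * q2' - q2 * q1')%Z) in *.
    destruct (Z_le_gt_dec k 0); nia. }
  destruct Hgen as [p [r1 [r2 [R1 [R2 [R3 [P1 P2]]]]]]].
  destruct (Z_le_gt_dec (r1 + r2) d).
  - exists p, r1, r2. repeat split; lia.
  - exists (fst b1 + fst b2 - fst p, snd b1 + snd b2 - snd p)%Z, (d - r1)%Z, (d - r2)%Z.
    simpl. repeat split; try lia.
Qed.


Lemma det_scal_l d p s1 s2 b1 b2 c : (d * fst p = s1 * fst b1 + s2 * fst b2)%Z ->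
  (d * snd p = s1 * snd b1 + s2 * snd b2)%Z -> (d * det p c = s1 * det b1 c + s2 * det b2 c)%Z.
Proof. intros E1 E2. unfold det. replace (d * (fst p * snd c - snd p * fst c))%Z with
  ((d * fst p) * snd c - (d * snd p) * fst c)%Z by ring. rewrite E1, E2; ring. Qed.
Lemma det_scal_r d p s1 s2 b1 b2 c : (d * fst p = s1 * fst b1 + s2 * fst b2)%Z ->
  (d * snd p = s1 * snd b1 + s2 * snd b2)%Z -> (d * det c p = s1 * det c b1 + s2 * det c b2)%Z.
Proof. intros E1 E2. unfold det. replace (d * (fst c * snd p - snd c * fst p))%Z with
  (fst c * (d * snd p) - snd c * (d * fst p))%Z by ring. rewrite E1, E2; ring. Qed.
Lemma det_anti a b : det a b = (- det b a)%Z.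
Proof. unfold det; ring. Qed.
Lemma det_self a : det a a = 0%Z.
Proof. unfold det; ring. Qed.

Lemma step V b1 b2 b3 : V <> nil ->
  (forall c1 c2 c3, RLhyp c1 c2 c3 -> (DD c1 c2 c3 < DD b1 b2 b3)%Z -> RLconcl V c1 c2 c3) ->
  RLhyp b1 b2 b3 -> (1 <= det b2 b3)%Z -> (1 <= det b3 b1)%Z -> (2 <= det b1 b2)%Z ->
  RLconcl V b1 b2 b3.
Proof.
  intros HV IH Hh H1 H2 H3.
  destruct Hh as [Nb1 [Nb2 [Nb3 _]]].
  destruct (latpt b1 b2 H3) as [p [s1 [s2 [S1 [S2 [S12 [S0 [P1 P2]]]]]]]].
  set (d1 := det b2 b3) in *. set (d2 := det b3 b1) in *. set (d3 := det b1 b2) in *.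
  assert (Np : p <> (0%Z,0%Z)).
  { intros Ep.
    pose proof (det_scal_l d3 p s1 s2 b1 b2 b2 P1 P2) as A1.
    pose proof (det_scal_r d3 p s1 s2 b1 b2 b1 P1 P2) as A2.
    rewrite Ep in A1, A2. rewrite det_self in A1, A2. fold d3 in A1, A2.
    unfold det in A1, A2. simpl in A1, A2. nia. }
  pose proof (lincomb_hz V p d3 s1 s2 b1 b2 HV ltac:(lia) ltac:(lia) P1 P2) as LC.
  set (X := (s2 * d1 - s1 * d2)%Z).
  destruct (Z_le_gt_dec 0 X) as [HX|HX].
  -
    assert (E1 : (d3 * det p b3 = X)%Z).
    { rewrite (det_scal_l d3 p s1 s2 b1 b2 b3 P1 P2). unfold X. rewrite (det_anti b1 b3). fold d1 d2. ring. }
    assert (E3 : det b1 p = s2).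
    { assert (d3 * det b1 p = d3 * s2)%Z.
      { rewrite (det_scal_r d3 p s1 s2 b1 b2 b1 P1 P2). rewrite det_self. fold d3. ring. }
      nia. }
    assert (s2pos : (0 < s2)%Z) by (unfold X in HX; nia).
    assert (e1nn : (0 <= det p b3)%Z) by nia.
    destruct (IH b1 p b3) as [K [HK HKb]].
    + unfold RLhyp. fold d2. rewrite E3. repeat split; auto; lia.
    + unfold DD. fold d2. rewrite E3. unfold DD; fold d1 d2 d3.
      assert (d3 * det p b3 < d3 * d1)%Z by (rewrite E1; unfold X; nia). nia.
    + exists K. split; auto.
      pose proof (nice_nonneg V K HV HK).
      unfold DD, NN in HKb |- *. fold d1 d2 d3 in HKb; fold d1 d2 d3. rewrite E3 in HKb.
      set (e1 := det p b3) in *.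
      assert (HN : (d3 * (- (e1 * hz V b1 + d2 * hz V p + s2 * hz V b3)) <=
                    s2 * (- (d1 * hz V b1 + d2 * hz V b2 + d3 * hz V b3)))%Z).
      { replace (d3 * (- (e1 * hz V b1 + d2 * hz V p + s2 * hz V b3)))%Z with
          (- ((d3 * e1) * hz V b1) - d2 * (d3 * hz V p) - d3 * s2 * hz V b3)%Z by ring.
        rewrite E1. unfold X.
        assert (d2 * (s1 * hz V b1 + s2 * hz V b2) <= d2 * (d3 * hz V p))%Z
          by (apply Z.mul_le_mono_nonneg_l; lia).
        lia. }
      assert (HD : (s2 * (d1 + d2 + d3) <= d3 * (e1 + d2 + s2))%Z).
      { replace (d3 * (e1 + d2 + s2))%Z with (d3 * e1 + d3 * d2 + d3 * s2)%Z by ring.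
        rewrite E1. unfold X. nia. }
      assert (A : (K * (s2 * (d1 + d2 + d3)) <= K * (d3 * (e1 + d2 + s2)))%Z)
        by (apply Z.mul_le_mono_nonneg_l; lia).
      assert (B : (d3 * (K * (e1 + d2 + s2)) <= d3 * (6 * (- (e1 * hz V b1 + d2 * hz V p + s2 * hz V b3))))%Z)
        by (apply Z.mul_le_mono_nonneg_l; lia).
      assert (C : (s2 * (K * (d1 + d2 + d3)) <= s2 * (6 * (- (d1 * hz V b1 + d2 * hz V b2 + d3 * hz V b3))))%Z)
        by nia.
      apply (Z.mul_le_mono_pos_l _ _ s2); lia.
  -
    assert (E2 : (d3 * det b3 p = - X)%Z).
    { rewrite (det_scal_r d3 p s1 s2 b1 b2 b3 P1 P2). unfold X. rewrite (det_anti b3 b2). fold d1 d2. ring. }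
    assert (E3 : det p b2 = s1).
    { assert (d3 * det p b2 = d3 * s1)%Z.
      { rewrite (det_scal_l d3 p s1 s2 b1 b2 b2 P1 P2). rewrite det_self. fold d3. ring. }
      nia. }
    assert (s1pos : (0 < s1)%Z) by (unfold X in HX; nia).
    assert (e2nn : (0 < det b3 p)%Z) by nia.
    destruct (IH p b2 b3) as [K [HK HKb]].
    + unfold RLhyp. fold d1. rewrite E3. repeat split; auto; lia.
    + unfold DD. fold d1. rewrite E3. unfold DD; fold d1 d2 d3.
      assert (d3 * det b3 p < d3 * d2)%Z by (rewrite E2; unfold X; nia). nia.
    + exists K. split; auto.
      pose proof (nice_nonneg V K HV HK).
      unfold DD, NN in HKb |- *. fold d1 d2 d3 in HKb; fold d1 d2 d3. rewrite E3 in HKb.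
      set (e2 := det b3 p) in *.
      assert (HN : (d3 * (- (d1 * hz V p + e2 * hz V b2 + s1 * hz V b3)) <=
                    s1 * (- (d1 * hz V b1 + d2 * hz V b2 + d3 * hz V b3)))%Z).
      { replace (d3 * (- (d1 * hz V p + e2 * hz V b2 + s1 * hz V b3)))%Z with
          (- (d1 * (d3 * hz V p)) - (d3 * e2) * hz V b2 - d3 * s1 * hz V b3)%Z by ring.
        rewrite E2. unfold X.
        assert (d1 * (s1 * hz V b1 + s2 * hz V b2) <= d1 * (d3 * hz V p))%Z
          by (apply Z.mul_le_mono_nonneg_l; lia).
        lia. }
      assert (HD : (s1 * (d1 + d2 + d3) <= d3 * (d1 + e2 + s1))%Z).
      { replace (d3 * (d1 + e2 + s1))%Z with (d3 * d1 + d3 * e2 + d3 * s1)%Z by ring.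
        rewrite E2. unfold X. nia. }
      assert (A : (K * (s1 * (d1 + d2 + d3)) <= K * (d3 * (d1 + e2 + s1)))%Z)
        by (apply Z.mul_le_mono_nonneg_l; lia).
      assert (B : (d3 * (K * (d1 + e2 + s1)) <= d3 * (6 * (- (d1 * hz V p + e2 * hz V b2 + s1 * hz V b3))))%Z)
        by (apply Z.mul_le_mono_nonneg_l; lia).
      assert (C : (s1 * (K * (d1 + d2 + d3)) <= s1 * (6 * (- (d1 * hz V b1 + d2 * hz V b2 + d3 * hz V b3))))%Z)
        by nia.
      apply (Z.mul_le_mono_pos_l _ _ s1); lia.
Qed.


Lemma RL_n V (n : nat) : V <> nil -> forall b1 b2 b3, RLhyp b1 b2 b3 ->
  (DD b1 b2 b3 <= Z.of_nat n)%Z -> RLconcl V b1 b2 b3.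
Proof.
  intros HV. induction n as [|n IHn]; intros b1 b2 b3 Hh Hn.
  - exfalso. destruct Hh as [_ [_ [_ [_ [_ [_ H]]]]]]. unfold DD in Hn. lia.
  - assert (IH : forall c1 c2 c3, RLhyp c1 c2 c3 -> (DD c1 c2 c3 < DD b1 b2 b3)%Z -> RLconcl V c1 c2 c3).
    { intros c1 c2 c3 Hc Hlt. apply IHn; auto. lia. }
    pose proof Hh as [N1 [N2 [N3 [D1 [D2 [D3 D]]]]]].
    destruct (Z.eq_dec (det b2 b3) 0) as [Z1|Z1].
    { apply zero1; auto. }
    destruct (Z.eq_dec (det b3 b1) 0) as [Z2|Z2].
    { apply rot_concl. apply zero1; auto. apply rot_hyp; auto. }
    destruct (Z.eq_dec (det b1 b2) 0) as [Z3|Z3].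
    { apply rot_concl, rot_concl. apply zero1; auto. apply rot_hyp, rot_hyp; auto. }
    destruct (Z_le_gt_dec 2 (det b1 b2)) as [G3|G3].
    { apply step; auto; lia. }
    destruct (Z_le_gt_dec 2 (det b2 b3)) as [G1|G1].
    { apply rot_concl. apply step; auto; try lia.
      - intros c1 c2 c3 Hc Hlt. apply IH; auto. unfold DD in *; lia.
      - apply rot_hyp; auto. }
    destruct (Z_le_gt_dec 2 (det b3 b1)) as [G2|G2].
    { apply rot_concl, rot_concl. apply step; auto; try lia.
      - intros c1 c2 c3 Hc Hlt. apply IH; auto. unfold DD in *; lia.
      - apply rot_hyp, rot_hyp; auto. }
    apply ones; auto; lia.
Qed.

Lemma RL V b1 b2 b3 : V <> nil -> RLhyp b1 b2 b3 -> RLconcl V b1 b2 b3.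
Proof.
  intros HV Hh. apply (RL_n V (Z.to_nat (DD b1 b2 b3))); auto.
  destruct Hh as [_ [_ [_ [_ [_ [_ H]]]]]]. unfold DD. lia.
Qed.


Lemma pairing_to_pt a u : pairing a (to_pt u) = IZR (dot a u).
Proof. unfold pairing, to_pt, dot; simpl. rewrite plus_IZR, !mult_IZR. ring. Qed.

Lemma conv_vertex V u : In u V -> conv V (to_pt u).
Proof.
  intros Hu. exists ((u, 1) :: nil). simpl. split; [|split].
  - constructor; [simpl; split; [auto|lra]|constructor].
  - ring.
  - unfold to_pt. f_equal; ring.
Qed.

Lemma conv_lower V a y : conv V y -> IZR (hz V a) <= pairing a y.
Proof.
  intros [c [Hf [Hs Hy]]]. subst y.
  assert (G : forall c, Forall (fun p => In (fst p) V /\ 0 <= snd p) c ->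
    IZR (hz V a) * fold_right (fun p acc => snd p + acc) 0 c <=
    pairing a (fold_right (fun p acc =>
          (snd p * IZR (fst (fst p)) + fst acc,
           snd p * IZR (snd (fst p)) + snd acc)) (0, 0) c)).
  { clear Hf Hs. clear c. intros c. induction c as [|[u l] c IH]; intros H.
    - simpl. unfold pairing; simpl. lra.
    - inversion H as [|x y [Hu Hl] Hr]; subst. simpl in Hu, Hl. specialize (IH Hr).
      simpl.
      set (acc := fold_right (fun (p : Z * Z * R) (acc : R * R) =>
        (snd p * IZR (fst (fst p)) + fst acc, snd p * IZR (snd (fst p)) + snd acc)) (0, 0) c) in *.
      assert (E : pairing a (l * IZR (fst u) + fst acc, l * IZR (snd u) + snd acc) =
                  l * IZR (dot a u) + pairing a acc).
      { unfold pairing, dot; simpl. rewrite plus_IZR, !mult_IZR. ring. }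
      rewrite E. pose proof (hz_le V a u Hu) as Hle. apply IZR_le in Hle.
      assert (l * IZR (hz V a) <= l * IZR (dot a u)) by (apply Rmult_le_compat_l; lra).
      nra. }
  specialize (G c Hf). rewrite Hs in G. lra.
Qed.

Lemma is_hP_eq V a h : V <> nil -> is_hP (conv V) a h -> h = IZR (hz V a).
Proof.
  intros HV [[y [Hy E]] Hmin]. destruct (hz_ex V a HV) as [u [Hu Eu]].
  pose proof (conv_lower V a y Hy).
  pose proof (Hmin (to_pt u) (conv_vertex V u Hu)). rewrite pairing_to_pt, <- Eu in H0. lra.
Qed.

Lemma is_hP_ex V a : V <> nil -> is_hP (conv V) a (IZR (hz V a)).
Proof.
  intros HV. destruct (hz_ex V a HV) as [u [Hu Eu]]. split.
  - exists (to_pt u). split; [apply conv_vertex; auto|]. rewrite pairing_to_pt, Eu; auto.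
  - intros y Hy. apply conv_lower; auto.
Qed.

Definition f V a x := pairing a x - IZR (hz V a).

Lemma fa_iff V s x : V <> nil -> (fine_adjoint (conv V) s x <-> forall a, a <> (0%Z,0%Z) -> s <= f V a x).
Proof.
  intros HV. unfold fine_adjoint, f. split.
  - intros H a Ha. specialize (H a Ha _ (is_hP_ex V a HV)). lra.
  - intros H a Ha h Hh. rewrite (is_hP_eq V a h HV Hh). specialize (H a Ha). lra.
Qed.

Lemma pairing_vopp a x : pairing (vopp a) x = - pairing a x.
Proof. unfold pairing, vopp; simpl. rewrite !opp_IZR. ring. Qed.
Lemma pairing_vadd a b x : pairing (vadd a b) x = pairing a x + pairing b x.
Proof. unfold pairing, vadd; simpl. rewrite !plus_IZR. ring. Qed.

Lemma det_nz_l a b : det a b <> 0%Z -> a <> (0%Z,0%Z).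
Proof. intros H E; subst; apply H; unfold det; simpl; ring. Qed.
Lemma det_nz_r a b : det a b <> 0%Z -> b <> (0%Z,0%Z).
Proof. intros H E; subst; apply H; unfold det; simpl; ring. Qed.
Lemma det_nz_s a b : det a b <> 0%Z -> vopp (vadd a b) <> (0%Z,0%Z).
Proof. intros H E. apply H. destruct a as [x1 y1], b as [x2 y2]. unfold vopp, vadd in E; simpl in E.
  injection E; intros. unfold det; simpl. nia. Qed.

Lemma vopp_nz b : b <> (0%Z,0%Z) -> vopp b <> (0%Z,0%Z).
Proof. destruct b as [x y]; unfold vopp; simpl; intros H E; injection E; intros; apply H; f_equal; lia. Qed.

Lemma upper V s x K : V <> nil -> fine_adjoint (conv V) s x -> nice V K -> 6 * s <= IZR K.
Proof.
  intros HV Hf HK. rewrite (fa_iff V s x HV) in Hf. unfold f in Hf.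
  destruct HK as [[b [Hb ->]]|[a1 [a2 [Hd ->]]]].
  - pose proof (Hf b Hb). pose proof (Hf (vopp b) (vopp_nz b Hb)).
    rewrite pairing_vopp in H0. unfold W. rewrite mult_IZR, !minus_IZR, opp_IZR. lra.
  - pose proof (Hf a1 (det_nz_l _ _ Hd)). pose proof (Hf a2 (det_nz_r _ _ Hd)).
    pose proof (Hf _ (det_nz_s _ _ Hd)). rewrite pairing_vopp, pairing_vadd in H1.
    unfold S3. rewrite mult_IZR, !minus_IZR, opp_IZR. lra.
Qed.

Lemma pairing_cramer b1 b2 b3 x :
  IZR (det b2 b3) * pairing b1 x + IZR (det b3 b1) * pairing b2 x + IZR (det b1 b2) * pairing b3 x = 0.
Proof.
  unfold pairing.
  replace (IZR (det b2 b3) * (IZR (fst b1) * fst x + IZR (snd b1) * snd x) +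
   IZR (det b3 b1) * (IZR (fst b2) * fst x + IZR (snd b2) * snd x) +
   IZR (det b1 b2) * (IZR (fst b3) * fst x + IZR (snd b3) * snd x)) with
   (IZR (det b2 b3 * fst b1 + det b3 b1 * fst b2 + det b1 b2 * fst b3) * fst x +
    IZR (det b2 b3 * snd b1 + det b3 b1 * snd b2 + det b1 b2 * snd b3) * snd x)
   by (rewrite !plus_IZR, !mult_IZR; ring).
  rewrite cramer1, cramer2. simpl. ring.
Qed.

Definition minimal V Kst := nice V Kst /\ forall K, nice V K -> (Kst <= K)%Z.

Lemma key V Kst b1 b2 b3 x : V <> nil -> minimal V Kst -> RLhyp b1 b2 b3 ->
  IZR (det b2 b3 + det b3 b1 + det b1 b2) * (IZR Kst / 6) <=
  IZR (det b2 b3) * f V b1 x + IZR (det b3 b1) * f V b2 x + IZR (det b1 b2) * f V b3 x.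
Proof.
  intros HV [_ Hm] Hh. destruct (RL V b1 b2 b3 HV Hh) as [K [HK HKb]].
  pose proof (Hm K HK). pose proof Hh as [_ [_ [_ [_ [_ [_ D]]]]]].
  assert (A : (Kst * DD b1 b2 b3 <= 6 * NN V b1 b2 b3)%Z).
  { unfold DD in *. assert (Kst * (det b2 b3 + det b3 b1 + det b1 b2) <= K * (det b2 b3 + det b3 b1 + det b1 b2))%Z
      by (apply Z.mul_le_mono_nonneg_r; lia). lia. }
  apply IZR_le in A. unfold DD, NN in A. rewrite !mult_IZR, opp_IZR, !plus_IZR, !mult_IZR in A.
  unfold f. pose proof (pairing_cramer b1 b2 b3 x). rewrite !plus_IZR. nra.
Qed.


Lemma const_dot V c m : full_dim2 V -> (forall u, In u V -> dot c u = m) -> c = (0%Z,0%Z).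
Proof.
  intros [p [q [r [Hp [Hq [Hr Hd]]]]]] H.
  pose proof (H p Hp). pose proof (H q Hq). pose proof (H r Hr).
  destruct c as [c1 c2]. unfold dot in *; simpl in *.
  set (X1 := (fst q - fst p)%Z) in *. set (Y1 := (snd q - snd p)%Z) in *.
  set (X2 := (fst r - fst p)%Z) in *. set (Y2 := (snd r - snd p)%Z) in *.
  assert (E1 : (c1 * X1 + c2 * Y1 = 0)%Z) by (subst X1 Y1; lia).
  assert (E2 : (c1 * X2 + c2 * Y2 = 0)%Z) by (subst X2 Y2; lia).
  assert (F1 : (c1 * (X1 * Y2 - Y1 * X2) = 0)%Z).
  { replace (c1 * (X1 * Y2 - Y1 * X2))%Z with (Y2 * (c1 * X1 + c2 * Y1) - Y1 * (c1 * X2 + c2 * Y2))%Z by ring.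
    rewrite E1, E2; ring. }
  assert (F2 : (c2 * (X1 * Y2 - Y1 * X2) = 0)%Z).
  { replace (c2 * (X1 * Y2 - Y1 * X2))%Z with (X1 * (c1 * X2 + c2 * Y2) - X2 * (c1 * X1 + c2 * Y1))%Z by ring.
    rewrite E1, E2; ring. }
  apply Z.mul_eq_0 in F1. apply Z.mul_eq_0 in F2.
  f_equal; tauto.
Qed.

Lemma full_dim_nil V : full_dim2 V -> V <> nil.
Proof. intros [p [_ [_ [Hp _]]]] E. subst. inversion Hp. Qed.

Lemma nice_pos V K : full_dim2 V -> nice V K -> (1 <= K)%Z.
Proof.
  intros HF HK. pose proof (full_dim_nil V HF) as HV.
  destruct HK as [[b [Hb ->]]|[a1 [a2 [Hd ->]]]].
  - pose proof (W_nonneg V b HV).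
    destruct (Z.eq_dec (W V b) 0) as [E|E]; [|lia]. exfalso. apply Hb.
    apply (const_dot V b (hz V b) HF). intros u Hu.
    pose proof (hz_le V b u Hu). pose proof (hz_le V (vopp b) u Hu).
    unfold W, dot, vopp in *; simpl in *. lia.
  - pose proof (S3_nonneg V a1 a2 HV).
    destruct (Z.eq_dec (S3 V a1 a2) 0) as [E|E]; [|lia]. exfalso. apply (det_nz_l _ _ Hd).
    apply (const_dot V a1 (hz V a1) HF). intros u Hu.
    pose proof (hz_le V a1 u Hu). pose proof (hz_le V a2 u Hu).
    pose proof (hz_le V (vopp (vadd a1 a2)) u Hu).
    unfold S3, dot, vopp, vadd in *; simpl in *. lia.
Qed.

Lemma min_exists (P : Z -> Prop) : (exists K, P K) -> (forall K, P K -> (0 <= K)%Z) ->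
  exists K0, P K0 /\ forall K, P K -> (K0 <= K)%Z.
Proof.
  intros [K HK] Hnn. apply NNPP. intros Hno.
  assert (A : forall n : nat, forall K, P K -> (Z.of_nat n <= K)%Z).
  { induction n as [|n IH]; intros K' HK'.
    - specialize (Hnn K' HK'). lia.
    - pose proof (IH K' HK') as IH'.
      destruct (Z.eq_dec K' (Z.of_nat n)) as [E|E]; [|lia].
      exfalso. apply Hno. exists K'. split; auto. intros K'' HK''. specialize (IH K'' HK''). lia. }
  specialize (A (S (Z.to_nat K)) K HK). specialize (Hnn K HK). lia.
Qed.

Lemma minimal_exists V : full_dim2 V -> exists Kst, minimal V Kst.
Proof.
  intros HF. pose proof (full_dim_nil V HF) as HV.
  apply min_exists.
  - exists (3 * W V (1,0))%Z. left. exists (1,0)%Z. split; auto. intros E; inversion E.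
  - intros K HK. apply (nice_nonneg V K HV HK).
Qed.


Lemma div_cancel_le (d c y : R) : 0 < d -> d * c <= d * y -> c <= y.
Proof. intros. apply Rmult_le_reg_l with d; auto. Qed.

Lemma caseA V Kst a1 a2 : V <> nil -> minimal V Kst -> (0 < det a1 a2)%Z ->
  Kst = (2 * S3 V a1 a2)%Z -> exists x, forall a, a <> (0%Z,0%Z) -> IZR Kst / 6 <= f V a x.
Proof.
  intros HV Hm Hd EK.
  set (a3 := vopp (vadd a1 a2)).
  set (c := IZR Kst / 6).
  set (dl := IZR (det a1 a2)).
  assert (Hdl : 0 < dl) by (apply IZR_lt; auto).
  set (al1 := IZR (hz V a1) + c). set (al2 := IZR (hz V a2) + c).
  set (x := ((al1 * IZR (snd a2) - al2 * IZR (snd a1)) / dl, (IZR (fst a1) * al2 - IZR (fst a2) * al1) / dl)).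
  assert (Edl : dl = IZR (fst a1) * IZR (snd a2) - IZR (snd a1) * IZR (fst a2)).
  { unfold dl, det. rewrite minus_IZR, !mult_IZR. ring. }
  assert (F1 : f V a1 x = c).
  { unfold f, pairing, x; simpl. unfold al1. field_simplify; [|lra]. rewrite Edl. field. lra. }
  assert (F2 : f V a2 x = c).
  { unfold f, pairing, x; simpl. unfold al2. field_simplify; [|lra]. rewrite Edl. field. lra. }
  assert (F3 : f V a3 x = c).
  { unfold f in *. unfold a3. rewrite pairing_vopp, pairing_vadd.
    assert (IZR Kst = 2 * (- IZR (hz V a1) - IZR (hz V a2) - IZR (hz V (vopp (vadd a1 a2))))).
    { rewrite EK. unfold S3. rewrite mult_IZR, !minus_IZR, opp_IZR. ring. }
    unfold c in *. lra. }
  exists x. intros a Ha.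
  assert (N1 : a1 <> (0%Z,0%Z)) by (apply (det_nz_l a1 a2); lia).
  assert (N2 : a2 <> (0%Z,0%Z)) by (apply (det_nz_r a1 a2); lia).
  assert (N3 : a3 <> (0%Z,0%Z)) by (apply (det_nz_s a1 a2); lia).
  assert (D23 : det a2 a3 = det a1 a2) by (unfold a3, det, vopp, vadd; simpl; ring).
  assert (D31 : det a3 a1 = det a1 a2) by (unfold a3, det, vopp, vadd; simpl; ring).
  assert (Es : (det a1 a + det a2 a + det a3 a = 0)%Z) by (unfold a3, det, vopp, vadd; simpl; ring).
  assert (Aa2 : det a a2 = (- det a2 a)%Z) by (unfold det; ring).
  assert (Aa3 : det a a3 = (- det a3 a)%Z) by (unfold det; ring).
  assert (Aa1 : det a a1 = (- det a1 a)%Z) by (unfold det; ring).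
  set (u := det a1 a) in *. set (v := det a2 a) in *. set (w := det a3 a) in *.
  destruct (Z_le_gt_dec 0 w) as [Hw|Hw]; destruct (Z_le_gt_dec v 0) as [Hv|Hv];
  destruct (Z_le_gt_dec 0 u) as [Hu|Hu].
  all: first
   [ (assert (Hc : (0 <= w)%Z /\ (v <= 0)%Z) by lia;
      pose proof (key V Kst a a2 a3 x HV Hm) as K;
      rewrite D23, Aa2 in K; fold w in K;
      assert (Hh : RLhyp a a2 a3) by (unfold RLhyp; rewrite D23, Aa2; fold w; repeat split; auto; lia);
      specialize (K Hh); rewrite F2, F3 in K; rewrite !plus_IZR, opp_IZR in K;
      fold dl c in K; apply (div_cancel_le dl); lra)
   | (assert (Hc : (w <= 0)%Z /\ (0 <= u)%Z) by lia;
      pose proof (key V Kst a1 a a3 x HV Hm) as K;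
      rewrite D31, Aa3 in K; fold u in K;
      assert (Hh : RLhyp a1 a a3) by (unfold RLhyp; rewrite D31, Aa3; fold u; repeat split; auto; lia);
      specialize (K Hh); rewrite F1, F3 in K; rewrite !plus_IZR, opp_IZR in K;
      fold dl c in K; apply (div_cancel_le dl); lra)
   | (assert (Hc : (0 <= v)%Z /\ (u <= 0)%Z) by lia;
      pose proof (key V Kst a1 a2 a x HV Hm) as K;
      rewrite Aa1 in K; fold v in K;
      assert (Hh : RLhyp a1 a2 a) by (unfold RLhyp; rewrite Aa1; fold v; repeat split; auto; lia);
      specialize (K Hh); rewrite F1, F2 in K; rewrite !plus_IZR, opp_IZR in K;
      fold dl c in K; apply (div_cancel_le dl); lra) ].
Qed.


Lemma caseB V Kst b : V <> nil -> minimal V Kst -> b <> (0%Z,0%Z) ->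
  Kst = (3 * W V b)%Z -> exists x, forall a, a <> (0%Z,0%Z) -> IZR Kst / 6 <= f V a x.
Proof.
  intros HV Hm Hb EK.
  set (c := IZR Kst / 6).
  set (nbz := (fst b * fst b + snd b * snd b)%Z).
  assert (Hnbz : (0 < nbz)%Z).
  { destruct b as [b1 b2]; unfold nbz; simpl.
    destruct (Z.eq_dec b1 0); destruct (Z.eq_dec b2 0); subst; try nia. exfalso; apply Hb; auto. }
  set (nb := IZR nbz).
  assert (Hnb : 0 < nb) by (apply IZR_lt; auto).
  assert (Enb : nb = IZR (fst b) * IZR (fst b) + IZR (snd b) * IZR (snd b)).
  { unfold nb, nbz. rewrite plus_IZR, !mult_IZR. ring. }
  set (al := IZR (hz V b) + c).
  set (x0 := (al * IZR (fst b) / nb, al * IZR (snd b) / nb)).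
  set (xt := fun t => (fst x0 - t * IZR (snd b), snd x0 + t * IZR (fst b))).
  assert (Pxt : forall a t, f V a (xt t) = f V a x0 + t * IZR (det b a)).
  { intros a t. unfold f, pairing, xt, det. rewrite minus_IZR, !mult_IZR. simpl. ring. }
  assert (Fb : f V b x0 = c).
  { unfold f, pairing, x0. simpl. unfold al. field_simplify; [|lra]. rewrite Enb. field. lra. }
  assert (Fob : f V (vopp b) x0 = c).
  { unfold f. rewrite pairing_vopp. unfold f in Fb.
    assert (IZR Kst = 3 * (- IZR (hz V b) - IZR (hz V (vopp b)))).
    { rewrite EK. unfold W. rewrite mult_IZR, !minus_IZR, opp_IZR. ring. }
    unfold c in *. lra. }
  assert (Fbt : forall t, f V b (xt t) = c).
  { intros t. rewrite Pxt, det_self. simpl. lra. }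
  assert (Fobt : forall t, f V (vopp b) (xt t) = c).
  { intros t. rewrite Pxt. replace (det b (vopp b)) with 0%Z by (unfold det, vopp; simpl; ring). lra. }
  assert (Compat : forall a a', (0 < det b a)%Z -> (det b a' < 0)%Z ->
     0 <= - IZR (det b a') * (f V a x0 - c) + IZR (det b a) * (f V a' x0 - c)).
  { intros a a' Hp Hq.
    assert (Na : a <> (0%Z,0%Z)) by (apply (det_nz_r b a); lia).
    assert (Na' : a' <> (0%Z,0%Z)) by (apply (det_nz_r b a'); lia).
    destruct (Z_le_gt_dec 0 (det a a')) as [Hd|Hd].
    - pose proof (key V Kst a a' b x0 HV Hm) as K.
      rewrite (det_anti a' b) in K.
      assert (Hh : RLhyp a a' b) by (unfold RLhyp; rewrite (det_anti a' b); repeat split; auto; lia).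
      specialize (K Hh). rewrite Fb in K. rewrite !plus_IZR, opp_IZR in K. fold c in K. lra.
    - pose proof (key V Kst a' a (vopp b) x0 HV Hm) as K.
      replace (det a (vopp b)) with (det b a) in K by (unfold det, vopp; simpl; ring).
      replace (det (vopp b) a') with (- det b a')%Z in K by (unfold det, vopp; simpl; ring).
      rewrite (det_anti a' a) in K.
      assert (Hh : RLhyp a' a (vopp b)).
      { unfold RLhyp. replace (det a (vopp b)) with (det b a) by (unfold det, vopp; simpl; ring).
        replace (det (vopp b) a') with (- det b a')%Z by (unfold det, vopp; simpl; ring).
        rewrite (det_anti a' a). repeat split; auto; try lia. apply vopp_nz; auto. }
      specialize (K Hh). rewrite Fob in K. rewrite !plus_IZR, !opp_IZR in K. fold c in K. lra. }
  assert (Cmp : forall a a', (0 < det b a)%Z -> (det b a' < 0)%Z ->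
     (c - f V a x0) / IZR (det b a) <= (c - f V a' x0) / IZR (det b a')).
  { intros a a' Hp Hq. pose proof (Compat a a' Hp Hq) as C.
    apply IZR_lt in Hp. apply IZR_lt in Hq.
    set (p := IZR (det b a)) in *. set (q := IZR (det b a')) in *.
    set (y1 := (c - f V a x0) / p). set (y2 := (c - f V a' x0) / q).
    assert (E1 : f V a x0 = c - y1 * p) by (unfold y1; field; lra).
    assert (E2 : f V a' x0 = c - y2 * q) by (unfold y2; field; lra).
    rewrite E1, E2 in C.
    assert (0 <= p * q * (y1 - y2)) by (ring_simplify; ring_simplify in C; lra).
    destruct (Rle_dec y1 y2); auto. exfalso.
    assert (p * q < 0) by nra. nra. }
  set (bp := (- snd b, fst b)%Z).
  assert (Hbp : (0 < det b bp)%Z) by (unfold bp, det; simpl; fold nbz; unfold nbz; lia).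
  assert (Hbm : (det b (vopp bp) < 0)%Z) by (unfold bp, det, vopp; simpl; unfold nbz in Hnbz; lia).
  set (E := fun y => exists a, (0 < det b a)%Z /\ y = (c - f V a x0) / IZR (det b a)).
  assert (Hbd : bound E).
  { exists ((c - f V (vopp bp) x0) / IZR (det b (vopp bp))). intros y [a [Ha ->]]. apply Cmp; auto. }
  assert (Hne : exists y, E y).
  { exists ((c - f V bp x0) / IZR (det b bp)). exists bp. split; auto. }
  destruct (completeness E Hbd Hne) as [t [Ht1 Ht2]].
  exists (xt t). intros a Ha. fold c. rewrite Pxt.
  destruct (Z_dec 0 (det b a)) as [[Hp|Hp]|Hp].
  - assert (Hy : (c - f V a x0) / IZR (det b a) <= t) by (apply Ht1; exists a; auto).
    apply IZR_lt in Hp. set (p := IZR (det b a)) in *.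
    set (y := (c - f V a x0) / p) in *.
    assert (E1 : f V a x0 = c - y * p) by (unfold y; field; lra). rewrite E1. nra.
  - assert (Hy : t <= (c - f V a x0) / IZR (det b a)).
    { apply Ht2. intros y [a0 [Ha0 ->]]. apply Cmp; auto; lia. }
    assert (Hp' : (det b a < 0)%Z) by lia. apply IZR_lt in Hp'. set (q := IZR (det b a)) in *.
    set (y := (c - f V a x0) / q) in *.
    assert (E1 : f V a x0 = c - y * q) by (unfold y; field; lra). rewrite E1. nra.
  - rewrite <- Hp. rewrite Rmult_0_r, Rplus_0_r. rewrite <- (Rplus_0_r (f V a x0)).
    rewrite <- (Rmult_0_r t). replace 0%Z with (det b a) at 0 by auto.
    replace (f V a x0 + t * 0) with (f V a (xt t)) by (rewrite Pxt, <- Hp; simpl; ring).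
    set (rho := dot b a).
    assert (Hrho : rho <> 0%Z).
    { intros Er. apply Ha. unfold rho, dot, det in *. destruct a as [a1 a2]; destruct b as [b1 b2]; simpl in *.
      unfold nbz in Hnbz; simpl in Hnbz.
      assert (A1 : (nbz * a1 = 0)%Z).
      { unfold nbz; simpl. replace ((b1 * b1 + b2 * b2) * a1)%Z with (b1 * (b1 * a1 + b2 * a2) - b2 * (b1 * a2 - b2 * a1))%Z by ring.
        rewrite Er, <- Hp. ring. }
      assert (A2 : (nbz * a2 = 0)%Z).
      { unfold nbz; simpl. replace ((b1 * b1 + b2 * b2) * a2)%Z with (b2 * (b1 * a1 + b2 * a2) + b1 * (b1 * a2 - b2 * a1))%Z by ring.
        rewrite Er, <- Hp. ring. }
      unfold nbz in A1, A2; simpl in A1, A2. f_equal; nia. }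
    destruct (Z_le_gt_dec rho 0) as [Hr|Hr].
    +
      pose proof (key V Kst a b bp (xt t) HV Hm) as K.
      assert (D1 : det b bp = nbz) by (unfold bp, det, nbz; simpl; ring).
      assert (D2 : det bp a = (- rho)%Z) by (unfold bp, det, rho, dot; simpl; ring).
      assert (D3 : det a b = 0%Z) by (rewrite det_anti, <- Hp; ring).
      rewrite D1, D2, D3 in K.
      assert (Hh : RLhyp a b bp).
      { unfold RLhyp. rewrite D1, D2, D3. repeat split; auto; try lia.
        unfold bp. intros E0. injection E0; intros. apply Hb. destruct b; simpl in *; f_equal; lia. }
      specialize (K Hh). rewrite Fbt in K. rewrite !plus_IZR, opp_IZR in K. fold c nb in K.
      apply (div_cancel_le nb); auto. simpl in K. lra.
    +
      set (bm := (snd b, - fst b)%Z).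
      pose proof (key V Kst a (vopp b) bm (xt t) HV Hm) as K.
      assert (D1 : det (vopp b) bm = nbz) by (unfold bm, det, nbz, vopp; simpl; ring).
      assert (D2 : det bm a = rho) by (unfold bm, det, rho, dot; simpl; ring).
      assert (D3 : det a (vopp b) = 0%Z).
      { replace (det a (vopp b)) with (det b a) by (unfold det, vopp; simpl; ring). auto. }
      rewrite D1, D2, D3 in K.
      assert (Hh : RLhyp a (vopp b) bm).
      { unfold RLhyp. rewrite D1, D2, D3. repeat split; auto; try lia.
        - apply vopp_nz; auto.
        - unfold bm. intros E0. injection E0; intros. apply Hb. destruct b; simpl in *; f_equal; lia. }
      specialize (K Hh). rewrite Fobt in K. rewrite !plus_IZR in K. fold c nb in K.
      apply (div_cancel_le nb); auto. simpl in K. lra.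
Qed.


Lemma forward mu : fine_spectrum2 mu ->
  exists k : nat, (0 < k)%nat /\ (mu = 2 / INR k \/ mu = 3 / INR k).
Proof.
  intros [V [HF [sg [[Hub Hleast] Emu]]]].
  pose proof (full_dim_nil V HF) as HV.
  destruct (minimal_exists V HF) as [Kst Hm].
  pose proof Hm as [HK _].
  pose proof (nice_pos V Kst HF HK) as Kpos.
  set (c := IZR Kst / 6).
  assert (Hc : 0 < c) by (unfold c; apply IZR_le in Kpos; lra).
  assert (Hx : exists x, forall a, a <> (0%Z,0%Z) -> c <= f V a x).
  { destruct HK as [[b [Hb EK]]|[a1 [a2 [Hd EK]]]].
    - apply (caseB V Kst b); auto.
    - destruct (Z_dec 0 (det a1 a2)) as [[H|H]|H].
      + apply (caseA V Kst a1 a2); auto.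
      + apply (caseA V Kst a2 a1); auto.
        * rewrite det_anti; lia.
        * rewrite EK. unfold S3. replace (vadd a2 a1) with (vadd a1 a2) by (unfold vadd; f_equal; ring). lia.
      + exfalso; apply Hd; auto. }
  destruct Hx as [x Hx].
  assert (Hin : 0 < c /\ exists x, fine_adjoint (conv V) c x).
  { split; auto. exists x. apply fa_iff; auto. }
  assert (E1 : c <= sg) by (apply Hub; auto).
  assert (E2 : sg <= c).
  { apply Hleast. intros s [Hs [y Hy]]. pose proof (upper V s y Kst HV Hy HK). unfold c; lra. }
  assert (Esg : sg = c) by lra.
  rewrite Esg in Emu. unfold c in Emu.
  destruct HK as [[b [Hb EK]]|[a1 [a2 [Hd EK]]]].
  - exists (Z.to_nat (W V b)). split; [lia|]. left.
    rewrite Emu, INR_IZR_INZ, Z2Nat.id by lia. rewrite EK, mult_IZR.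
    assert (0 < IZR (W V b)) by (apply IZR_lt; lia). field. lra.
  - exists (Z.to_nat (S3 V a1 a2)). split; [lia|]. right.
    rewrite Emu, INR_IZR_INZ, Z2Nat.id by lia. rewrite EK, mult_IZR.
    assert (0 < IZR (S3 V a1 a2)) by (apply IZR_lt; lia). field. lra.
Qed.

Lemma square_sp (k : nat) : (0 < k)%nat -> fine_spectrum2 (2 / INR k).
Proof.
  intros Hk. set (kz := Z.of_nat k).
  assert (Hkz : (1 <= kz)%Z) by (unfold kz; lia).
  set (V := ((0,0) :: (kz,0) :: (0,kz) :: (kz,kz) :: nil)%Z).
  assert (HV : V <> nil) by discriminate.
  exists V. split.
  { exists (0,0)%Z, (kz,0)%Z, (0,kz)%Z. unfold V; simpl. repeat split; auto 10. nia. }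
  set (sg := IZR kz / 2).
  assert (Hkr : 1 <= IZR kz) by (apply IZR_le; auto).
  exists sg. split; [split|].
  - intros s [Hs [y Hy]]. rewrite (fa_iff V s y HV) in Hy.
    pose proof (Hy (1,0)%Z ltac:(discriminate)) as A1.
    pose proof (Hy (-1,0)%Z ltac:(discriminate)) as A2.
    assert (B1 : (0 <= hz V (1,0))%Z).
    { apply hz_ge; auto. intros u Hu. unfold V in Hu. simpl In in Hu. unfold dot.
      repeat (destruct Hu as [<-|Hu]; [cbn [fst snd]; lia|]). destruct Hu. }
    assert (B2 : (- kz <= hz V (-1,0))%Z).
    { apply hz_ge; auto. intros u Hu. unfold V in Hu. simpl In in Hu. unfold dot.
      repeat (destruct Hu as [<-|Hu]; [cbn [fst snd]; lia|]). destruct Hu. }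
    apply IZR_le in B1. apply IZR_le in B2. rewrite opp_IZR in B2.
    unfold f, pairing in A1, A2; cbn [fst snd] in A1, A2. unfold sg. lra.
  - intros b Hb. apply Hb. split; [unfold sg; lra|].
    exists (sg, sg). apply fa_iff; auto. intros [a1 a2] Ha.
    pose proof (hz_le V (a1,a2) (0,0)%Z ltac:(unfold V; simpl; auto)) as H1.
    pose proof (hz_le V (a1,a2) (kz,0)%Z ltac:(unfold V; simpl; auto)) as H2.
    pose proof (hz_le V (a1,a2) (0,kz)%Z ltac:(unfold V; simpl; auto)) as H3.
    pose proof (hz_le V (a1,a2) (kz,kz)%Z ltac:(unfold V; simpl; auto 10)) as H4.
    unfold dot in H1, H2, H3, H4; cbn [fst snd] in H1, H2, H3, H4.
    set (h := hz V (a1,a2)) in *.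
    assert (Z1 : (2 * h + kz <= kz * (a1 + a2))%Z).
    { assert (a1 <> 0%Z \/ a2 <> 0%Z) by (destruct (Z.eq_dec a1 0); destruct (Z.eq_dec a2 0); subst; auto; exfalso; auto).
      destruct (Z_le_gt_dec 0 a1); destruct (Z_le_gt_dec 0 a2); nia. }
    apply IZR_le in Z1. rewrite plus_IZR, !mult_IZR, plus_IZR in Z1.
    unfold f, pairing; cbn [fst snd]. fold h. unfold sg. lra.
  - rewrite INR_IZR_INZ. fold kz. unfold sg. field. lra.
Qed.

Lemma triangle_sp (k : nat) : (0 < k)%nat -> fine_spectrum2 (3 / INR k).
Proof.
  intros Hk. set (kz := Z.of_nat k).
  assert (Hkz : (1 <= kz)%Z) by (unfold kz; lia).
  set (V := ((0,0) :: (kz,0) :: (0,kz) :: nil)%Z).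
  assert (HV : V <> nil) by discriminate.
  exists V. split.
  { exists (0,0)%Z, (kz,0)%Z, (0,kz)%Z. unfold V; simpl. repeat split; auto 10. nia. }
  set (sg := IZR kz / 3).
  assert (Hkr : 1 <= IZR kz) by (apply IZR_le; auto).
  exists sg. split; [split|].
  - intros s [Hs [y Hy]]. rewrite (fa_iff V s y HV) in Hy.
    pose proof (Hy (1,0)%Z ltac:(discriminate)) as A1.
    pose proof (Hy (0,1)%Z ltac:(discriminate)) as A2.
    pose proof (Hy (-1,-1)%Z ltac:(discriminate)) as A3.
    assert (B1 : (0 <= hz V (1,0))%Z).
    { apply hz_ge; auto. intros u Hu. unfold V in Hu. simpl In in Hu. unfold dot.
      repeat (destruct Hu as [<-|Hu]; [cbn [fst snd]; lia|]). destruct Hu. }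
    assert (B2 : (0 <= hz V (0,1))%Z).
    { apply hz_ge; auto. intros u Hu. unfold V in Hu. simpl In in Hu. unfold dot.
      repeat (destruct Hu as [<-|Hu]; [cbn [fst snd]; lia|]). destruct Hu. }
    assert (B3 : (- kz <= hz V (-1,-1))%Z).
    { apply hz_ge; auto. intros u Hu. unfold V in Hu. simpl In in Hu. unfold dot.
      repeat (destruct Hu as [<-|Hu]; [cbn [fst snd]; lia|]). destruct Hu. }
    apply IZR_le in B1. apply IZR_le in B2. apply IZR_le in B3. rewrite opp_IZR in B3.
    unfold f, pairing in A1, A2, A3; cbn [fst snd] in A1, A2, A3. unfold sg. lra.
  - intros b Hb. apply Hb. split; [unfold sg; lra|].
    exists (sg, sg). apply fa_iff; auto. intros [a1 a2] Ha.
    pose proof (hz_le V (a1,a2) (0,0)%Z ltac:(unfold V; simpl; auto)) as H1.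
    pose proof (hz_le V (a1,a2) (kz,0)%Z ltac:(unfold V; simpl; auto)) as H2.
    pose proof (hz_le V (a1,a2) (0,kz)%Z ltac:(unfold V; simpl; auto)) as H3.
    unfold dot in H1, H2, H3; cbn [fst snd] in H1, H2, H3.
    set (h := hz V (a1,a2)) in *.
    assert (Z1 : (3 * h + kz <= kz * (a1 + a2))%Z).
    { assert (a1 <> 0%Z \/ a2 <> 0%Z) by (destruct (Z.eq_dec a1 0); destruct (Z.eq_dec a2 0); subst; auto; exfalso; auto).
      destruct (Z_le_gt_dec 0 a1); destruct (Z_le_gt_dec 0 a2); try nia;
      destruct (Z_le_gt_dec a1 a2); nia. }
    apply IZR_le in Z1. rewrite plus_IZR, !mult_IZR, plus_IZR in Z1.
    unfold f, pairing; cbn [fst snd]. fold h. unfold sg. lra.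
  - rewrite INR_IZR_INZ. fold kz. unfold sg. field. lra.
Qed.

Theorem mainTheorem6 (mu : R) :
  fine_spectrum2 mu <->
  exists k : nat, (0 < k)%nat /\ (mu = 2 / INR k \/ mu = 3 / INR k).
Proof.
  split.
  - apply forward.
  - intros [k [Hk [E|E]]]; subst mu.
    + apply square_sp; auto.
    + apply triangle_sp; auto.
Qed.
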